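(* Fix $k\in\mathbb{Z}_{\ge0}$. Let $S$ be a ubiquitously dense subset of $[0,\infty)$ and $R=(r_i)_{i\in\mathbb{Z}_{\ge0}}$ an $S$-gauge system on $\Omega$. Then the function $\tilde\Lambda^k[R]\colon N(\Omega)\times N(\Omega)\to[0,\infty)$ satisfies: (1) $\tilde\Lambda^k[R]\in\mathrm{Met}(N(\Omega))$; (2) the diameter of $N(\Omega)$ with respect to $\tilde\Lambda^k[R]$ is at most $2\cdot2^{-F_k(0)}=2^{-k}$; (3) $\tilde\Lambda^k[R]$ is complete; (4) $\tilde\Lambda^k[R]$ is strongly rigid.
   Context: A subset $S$ of $[0,\infty)$ is ubiquitously dense if $\operatorname{card}(U\cap S)=\operatorname{card}(S)$ for every non-empty open $U\subseteq[0,\infty)$. Fix a bijection $Q\colon\mathbb{Z}_{\ge0}\to\mathbb{Q}_{\ge0}$ with property (M): setting $\mu_m=\min Q^{-1}([m,m+1)\cap\mathbb{Q})$, we have $Q(\mu_m)=m$ and $\mu_m<\mu_{m+1}$ for all $m$. For a summable sequence $\alpha=(a_i)$ of positive reals and $B\subseteq\mathbb{Q}_{\ge0}$, $\langle\alpha,B\rangle=\sum_{i:\,Q(i)\in B}a_i$ ($=0$ if $B=\emptyset$). For $k\in\mathbb{Z}_{\ge0}$ let $F_k(n)=2^n+k$ and $\lambda^k_i=2^{-F_k(i)}$, $\lambda^k=(\lambda^k_i)_{i\ge0}$. $\Omega$ is a discrete space of cardinality $\mathfrak{c}$ and $N(\Omega)=\Omega^{\mathbb{Z}_{\ge0}}$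 with the product topology. For $T\subseteq[0,\infty)$, a $T$-semi-metric on a set $Y$ is a symmetric map $r\colon Y\times Y\to[0,\infty)$ with $r(x,y)=0$ iff $x=y$ and $r(x,y)\in T$ for $x\ne y$; it (or a metric) is strongly rigid if $r(x,y)=r(u,v)\neq0$ implies $\{x,y\}=\{u,v\}$. For dense $S\subseteq[0,\infty)$, an $S$-gauge system on $\Omega$ is a sequence $(r_i)_{i\ge0}$ with each $r_i$ a strongly rigid $(S\cap(i,i+1))$-semi-metric on $\Omega$. Put $J(m,t)=[m,t)\cap\mathbb{Q}$, $\Lambda^k_m[r](a,b)=\langle\lambda^k,J(m,r(a,b))\rangle$ for $a,b\in\Omega$, and for $x=(x_i),y=(y_i)\in N(\Omega)$, $\Lambda^k[R](x,y)=\sum_{m\ge0}\Lambda^k_m[r_m](x_m,y_m)=\langle\lambda^k,\bigsqcup_{m\ge0}J(m,r_m(x_m,y_m))\rangle$. For each $n\in\mathbb{Z}_{\ge0}$ fix an injective map $f_n\colon\Omega^{n+1}\to\Omega$, and define $\Phi\colon N(\Omega)\to N(\Omega)$ by $\Phi(x)_{2n}=x_n$, $\Phi(x)_{2n+1}=f_n(x_0,\dots,x_n)$. Finally $\tilde\Lambda^k[R](x,y)=\Lambda^k[R](\Phi(x),\Phi(y))$. $\mathrm{Met}(Y)$ is the set of metrics on $Y$ generating its topology. *)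

(* Defs.v *)
From Stdlib Require Import Reals Lra Lia List.
From Coquelicot Require Import Coquelicot.
Open Scope R_scope.

Definition is_rat (x : R) : Prop :=
  exists (a : Z) (b : Z), (b > 0)%Z /\ x = IZR a / IZR b.

Definition enum_nonneg_rat (Q : nat -> R) : Prop :=
  (forall i, 0 <= Q i /\ is_rat (Q i)) /\
  (forall i j, Q i = Q j -> i = j) /\
  (forall x, 0 <= x -> is_rat x -> exists i, Q i = x).

Definition propM (Q : nat -> R) : Prop :=
  exists mu : nat -> nat,
    forall m : nat,
      (INR m <= Q (mu m) < INR m + 1) /\
      (forall i, INR m <= Q i < INR m + 1 -> (mu m <= i)%nat) /\
      Q (mu m) = INR m /\
      (mu m < mu (S m))%nat.

(* <alpha, B> = sum_{i : Q(i) in B} a_i, for a (decidable) subset B. *)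
Definition pairing (Q : nat -> R) (a : nat -> R) (B : R -> bool) : R :=
  Series (fun i => if B (Q i) then a i else 0).

(* J(m,t) = [m,t) ∩ Q (membership test, applied only to rationals Q i) *)
Definition inJ (m : nat) (t : R) (x : R) : bool :=
  if Rle_dec (INR m) x then (if Rlt_dec x t then true else false) else false.

Definition F (k n : nat) : nat := (2 ^ n + k)%nat.
Definition lam (k i : nat) : R := / 2 ^ (F k i).

Definition card_eq (A B : R -> Prop) : Prop :=
  exists g : {x : R | A x} -> {x : R | B x},
    (forall u v, g u = g v -> u = v) /\ (forall w, exists u, g u = w).

Definition open_nonneg (U : R -> Prop) : Prop :=
  (forall x, U x -> 0 <= x) /\
  (forall x, U x -> exists eps, eps > 0 /\
     forall y, 0 <= y -> Rabs (y - x) < eps -> U y).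

Definition ubiq_dense (S : R -> Prop) : Prop :=
  (forall x, S x -> 0 <= x) /\
  forall U : R -> Prop, open_nonneg U -> (exists x, U x) ->
    card_eq (fun x => U x /\ S x) S.

Definition semi_metric_in {Y : Type} (T : R -> Prop) (r : Y -> Y -> R) : Prop :=
  (forall x y, 0 <= r x y) /\
  (forall x y, r x y = r y x) /\
  (forall x y, r x y = 0 <-> x = y) /\
  (forall x y, x <> y -> T (r x y)).

Definition strongly_rigid {Y : Type} (r : Y -> Y -> R) : Prop :=
  forall x y u v, r x y = r u v -> r x y <> 0 ->
    (x = u /\ y = v) \/ (x = v /\ y = u).

Definition gauge_system {Om : Type} (S : R -> Prop) (r : nat -> Om -> Om -> R)
  : Prop :=
  forall i : nat,
    semi_metric_in (fun t => S t /\ INR i < t < INR i + 1) (r i) /\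
    strongly_rigid (r i).

Definition LambdaM (Q : nat -> R) (k m : nat) {Om : Type}
  (rm : Om -> Om -> R) (a b : Om) : R :=
  pairing Q (lam k) (inJ m (rm a b)).

Definition Lambda (Q : nat -> R) (k : nat) {Om : Type}
  (r : nat -> Om -> Om -> R) (x y : nat -> Om) : R :=
  Series (fun m => LambdaM Q k m (r m) (x m) (y m)).

(* f n : Omega^{n+1} -> Omega, with Omega^{n+1} encoded as lists of length n+1 *)
Definition inj_on_len {Om : Type} (f : nat -> list Om -> Om) : Prop :=
  forall n l1 l2, length l1 = S n -> length l2 = S n ->
    f n l1 = f n l2 -> l1 = l2.

Definition Phi {Om : Type} (f : nat -> list Om -> Om) (x : nat -> Om)
  : nat -> Om :=
  fun j => if Nat.even j then x (Nat.div2 j)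
           else f (Nat.div2 j) (map x (seq 0 (S (Nat.div2 j)))).

Definition tLambda (Q : nat -> R) (k : nat) {Om : Type}
  (r : nat -> Om -> Om -> R) (f : nat -> list Om -> Om) (x y : nat -> Om) : R :=
  Lambda Q k r (Phi f x) (Phi f y).

Definition card_continuum (Om : Type) : Prop :=
  exists g : Om -> R, (forall a b, g a = g b -> a = b) /\ (forall t, exists a, g a = t).

Definition is_metric {Y : Type} (d : Y -> Y -> R) : Prop :=
  (forall x y, 0 <= d x y) /\
  (forall x y, d x y = 0 <-> x = y) /\
  (forall x y, d x y = d y x) /\
  (forall x y z, d x z <= d x y + d y z).

(* product topology of discrete spaces: basic opens are cylinders *)
Definition prod_open {Om : Type} (U : (nat -> Om) -> Prop) : Prop :=
  forall x, U x -> exists n : nat,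
    forall y, (forall i, (i < n)%nat -> y i = x i) -> U y.

Definition metric_open {Y : Type} (d : Y -> Y -> R) (U : Y -> Prop) : Prop :=
  forall x, U x -> exists eps, eps > 0 /\ forall y, d x y < eps -> U y.

Definition Met_N {Om : Type} (d : (nat -> Om) -> (nat -> Om) -> R) : Prop :=
  is_metric d /\ forall U, prod_open U <-> metric_open d U.

Definition complete_metric {Y : Type} (d : Y -> Y -> R) : Prop :=
  forall u : nat -> Y,
    (forall eps, eps > 0 -> exists N, forall n m, (N <= n)%nat -> (N <= m)%nat ->
        d (u n) (u m) < eps) ->
    exists l, forall eps, eps > 0 -> exists N, forall n, (N <= n)%nat -> d (u n) l < eps.

(* Main.v *)
Require Import Defs.
From Stdlib Require Import Reals List.
From Coquelicot Require Import Coquelicot.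
From Stdlib Require Import Lra Lia Classical FunctionalExtensionality ClassicalEpsilon.
Open Scope R_scope.

Section W.
Variable k : nat.

Lemma lam_pos i : 0 < lam k i.
Proof. unfold lam. apply Rinv_0_lt_compat, pow_lt; lra. Qed.

Lemma pow2_ge (n d : nat) : (2 ^ n + d <= 2 ^ (n + d))%nat.
Proof.
  induction d as [|d IH].
  - rewrite !Nat.add_0_r; lia.
  - rewrite !Nat.add_succ_r, Nat.pow_succ_r'. 
    assert (1 <= 2 ^ (n + d))%nat by (apply Nat.neq_0_lt_0, Nat.pow_nonzero; lia). lia.
Qed.

Lemma pow2_ge2 (n d : nat) : (1 <= n)%nat -> (2 ^ n + 2 * d <= 2 ^ (n + d))%nat.
Proof.
  intros Hn. induction d as [|d IH].
  - replace (n+0)%nat with n by lia; lia.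
  - rewrite !Nat.add_succ_r, Nat.pow_succ_r'.
    assert (2 <= 2 ^ (n + d))%nat.
    { destruct n as [|n]; [lia|]. simpl (S n + d)%nat. rewrite Nat.pow_succ_r'.
      assert (2 ^ (n + d) <> 0)%nat by (apply Nat.pow_nonzero; lia). lia. }
    lia.
Qed.

Lemma lam_shift (n d : nat) : lam k (n + d) <= lam k n * (1/2) ^ d.
Proof.
  unfold lam, F. replace (1/2) with (/2) by lra. rewrite pow_inv.
  rewrite <- Rinv_mult, <- pow_add.
  apply Rinv_le_contravar. apply pow_lt; lra.
  apply Rle_pow; [lra|]. pose proof (pow2_ge n d). lia.
Qed.

Lemma lam_shift4 (n d : nat) : (1 <= n)%nat -> lam k (n + d) <= lam k n * (1/4) ^ d.
Proof.
  intros Hn. unfold lam, F.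
  replace (1/4) with (/2 ^ 2) by lra. rewrite pow_inv. rewrite <- pow_mult.
  rewrite <- Rinv_mult, <- pow_add.
  apply Rinv_le_contravar. apply pow_lt; lra.
  apply Rle_pow; [lra|]. pose proof (pow2_ge2 n d Hn). lia.
Qed.

Lemma pow_le1' (q : R) (d : nat) : 0 <= q <= 1 -> q ^ d <= 1.
Proof. intros Hq. induction d; simpl. lra. pose proof (pow_le q d). nra. Qed.

Lemma lam_anti i j : (i <= j)%nat -> lam k j <= lam k i.
Proof.
  intros H. replace j with (i + (j - i))%nat by lia.
  eapply Rle_trans. apply lam_shift. pose proof (lam_pos i).
  assert ((1/2)^(j-i) <= 1). { apply pow_le1'; lra. } 
  assert (0 <= (1/2)^(j-i)) by (apply pow_le; lra). nra.
Qed.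

Lemma lam0_le1 : lam k 0 <= 1.
Proof. unfold lam. rewrite <- Rinv_1. apply Rinv_le_contravar; [lra|]. 
  apply pow_R1_Rle; lra. Qed.

Definition ind (D : nat -> bool) (i : nat) : R := if D i then lam k i else 0.
Definition w (D : nat -> bool) : R := Series (ind D).

Lemma ind_bounds D i : 0 <= ind D i <= lam k i.
Proof. unfold ind. pose proof (lam_pos i). destruct (D i); lra. Qed.

Lemma lam0_le1' : lam k 0 <= 1.
Proof. apply lam0_le1. Qed.

Lemma ex_lam : ex_series (lam k).
Proof.
  apply (@ex_series_le R_AbsRing R_CompleteNormedModule _ (fun i => (1/2)^i)).
  - intros n. change (Rabs (lam k n) <= (1/2)^n). rewrite Rabs_pos_eq by (left; apply lam_pos).
    pose proof (lam_shift 0 n) as A. simpl in A. pose proof lam0_le1 as B.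
    assert (C: 0 <= (1/2)^n) by (apply pow_le; lra). nra.
  - apply ex_series_geom. rewrite Rabs_pos_eq; lra.
Qed.

Lemma ex_ind D : ex_series (ind D).
Proof.
  apply (@ex_series_le R_AbsRing R_CompleteNormedModule _ (lam k)); [|apply ex_lam].
  intros n. change (Rabs (ind D n) <= lam k n). pose proof (ind_bounds D n). rewrite Rabs_pos_eq; lra.
Qed.

Lemma Series_zero : Series (fun _ => 0) = 0.
Proof.
  rewrite (Series_ext (fun _ => 0) (fun n => 0 * 0)) by (intros; ring).
  rewrite (Series_scal_l 0 (fun _ => 0)). ring.
Qed.

Lemma w_nonneg D : 0 <= w D.
Proof.
  rewrite <- Series_zero. unfold w. apply Series_le; [|apply ex_ind].
  intros n. pose proof (ind_bounds D n). lra.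
Qed.

Lemma w_mono D D' : (forall i, D i = true -> D' i = true) -> w D <= w D'.
Proof.
  intros H. unfold w. apply Series_le; [|apply ex_ind].
  intros n. unfold ind. pose proof (lam_pos n).
  destruct (D n) eqn:E. rewrite (H n E). lra. destruct (D' n); lra.
Qed.

Lemma w_false D : (forall i, D i = false) -> w D = 0.
Proof.
  intros H. unfold w. rewrite <- Series_zero. apply Series_ext. intros n. unfold ind. now rewrite H.
Qed.

Lemma w_add D E : (forall i, D i = true -> E i = false) ->
  w (fun i => orb (D i) (E i)) = w D + w E.
Proof.
  intros H. unfold w. rewrite <- Series_plus by apply ex_ind. apply Series_ext.
  intros n. unfold ind. destruct (D n) eqn:Ed. rewrite (H n Ed). simpl. ring.
  simpl. ring.
Qed.

Lemma w_split D n : w D = w (fun i => andb (D i) (i <? n)%nat) + w (fun i => andb (D i) (n <=? i)%nat).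
Proof.
  rewrite <- w_add.
  - unfold w. apply Series_ext. intros i. unfold ind.
    destruct (D i); simpl; auto. destruct (Nat.ltb_spec i n), (Nat.leb_spec n i); auto; lia.
  - intros i. destruct (D i); simpl; [|auto]. intros Hi.
    destruct (Nat.ltb_spec i n), (Nat.leb_spec n i); auto; lia.
Qed.

Definition gsh (c q : R) (N : nat) (i : nat) : R := if (N <=? i)%nat then c * q ^ (i - N) else 0.

Lemma gsh_ex c q N : 0 <= q < 1 -> ex_series (gsh c q N).
Proof.
  intros Hq. apply (ex_series_incr_n _ N).
  apply (ex_series_ext (fun j => scal c (q ^ j))).
  - intros j. unfold gsh. replace (N <=? N + j)%nat with true by (symmetry; apply Nat.leb_le; lia).
    replace (N + j - N)%nat with j by lia. reflexivity.
  - apply (@ex_series_scal_l R_AbsRing R_NormedModule c (fun j => q ^ j)). apply ex_series_geom. rewrite Rabs_pos_eq; lra.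
Qed.

Lemma gsh_val c q N : 0 <= q < 1 -> Series (gsh c q N) = c / (1 - q).
Proof.
  intros Hq. rewrite (Series_incr_n_aux _ N).
  - rewrite (Series_ext _ (fun j => c * q ^ j)).
    + rewrite Series_scal_l, Series_geom. field. lra. rewrite Rabs_pos_eq; lra.
    + intros j. unfold gsh. replace (N <=? N + j)%nat with true by (symmetry; apply Nat.leb_le; lia).
      replace (N + j - N)%nat with j by lia. reflexivity.
  - intros j Hj. unfold gsh. destruct (Nat.leb_spec N j); [lia|auto].
Qed.

Lemma w_geN D N : (forall i, D i = true -> (N <= i)%nat) -> w D <= 2 * lam k N.
Proof.
  intros H. replace (2 * lam k N) with (Series (gsh (lam k N) (1/2) N)).
  2:{ rewrite gsh_val by lra. field. }
  unfold w. apply Series_le; [|apply gsh_ex; lra].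
  intros i. unfold ind, gsh. pose proof (lam_pos i).
  destruct (D i) eqn:E.
  - rewrite (proj2 (Nat.leb_le _ _) (H i E)). split; [lra|].
    replace i with (N + (i - N))%nat at 1 by (pose proof (H i E); lia). apply lam_shift.
  - destruct (N <=? i)%nat. split; [lra|]. pose proof (lam_pos N).
    assert (0 <= (1/2)^(i-N)) by (apply pow_le; lra). nra. lra.
Qed.

Lemma w_geN4 D N : (1 <= N)%nat -> (forall i, D i = true -> (N <= i)%nat) -> w D <= 4/3 * lam k N.
Proof.
  intros HN H. replace (4/3 * lam k N) with (Series (gsh (lam k N) (1/4) N)).
  2:{ rewrite gsh_val by lra. field. }
  unfold w. apply Series_le; [|apply gsh_ex; lra].
  intros i. unfold ind, gsh. pose proof (lam_pos i).
  destruct (D i) eqn:E.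
  - rewrite (proj2 (Nat.leb_le _ _) (H i E)). split; [lra|].
    replace i with (N + (i - N))%nat at 1 by (pose proof (H i E); lia). apply lam_shift4; auto.
  - destruct (N <=? i)%nat. split; [lra|]. pose proof (lam_pos N).
    assert (0 <= (1/4)^(i-N)) by (apply pow_le; lra). nra. lra.
Qed.

Lemma lam_S n : lam k (S n) <= lam k n / 2.
Proof. pose proof (lam_shift n 1). replace (n+1)%nat with (S n) in H by lia. simpl in H. lra. Qed.

Lemma w_strict D n : (forall i, D i = true -> (S n <= i)%nat) -> w D < lam k n.
Proof.
  intros H. pose proof (w_geN4 D (S n) ltac:(lia) H). pose proof (lam_S n). pose proof (lam_pos n). lra.
Qed.

Lemma w_single D i : D i = true -> lam k i <= w D.
Proof.
  intros Hi. eapply Rle_trans; [|apply (w_mono (fun j => (j =? i)%nat))].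
  2:{ intros j Hj. apply Nat.eqb_eq in Hj. now subst. }
  unfold w. rewrite (Series_incr_n_aux _ i).
  2:{ intros j Hj. unfold ind. destruct (Nat.eqb_spec j i); [lia|auto]. }
  rewrite Series_incr_1.
  2:{ apply (ex_series_incr_n (ind (fun j => (j =? i)%nat)) i). apply ex_ind. }
  rewrite (Series_ext _ (fun _ => 0)).
  - rewrite Series_zero. unfold ind. rewrite Nat.add_0_r, Nat.eqb_refl. lra.
  - intros j. unfold ind. destruct (Nat.eqb_spec (i + S j) i); [lia|auto].
Qed.


Lemma w_ext D D' : (forall i, D i = D' i) -> w D = w D'.
Proof. intros H. unfold w, ind. apply Series_ext. intros n. now rewrite H. Qed.

Lemma w_inj D D' : w D = w D' -> forall i, D i = D' i.
Proof.
  intros Hw.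
  assert (forall n i, (i < n)%nat -> D i = D' i).
  { induction n as [|n IH]; intros i Hi; [lia|].
    destruct (Nat.eq_dec i n) as [->|Hne]; [|apply IH; lia].
    assert (Hlow : w (fun j => andb (D j) (j <? n)%nat) = w (fun j => andb (D' j) (j <? n)%nat)).
    { apply w_ext. intros j. destruct (Nat.ltb_spec j n); [|now rewrite !Bool.andb_false_r].
      rewrite IH; auto. }
    rewrite (w_split D n), (w_split D' n), Hlow in Hw.
    assert (Hc : forall E E', E n = true -> E' n = false ->
      w (fun j => andb (E j) (n <=? j)%nat) <> w (fun j => andb (E' j) (n <=? j)%nat)).
    { intros E E' H1 H2 Heq.
      pose proof (w_single (fun j => andb (E j) (n <=? j)%nat) n) as A.
      simpl in A. rewrite H1, Nat.leb_refl in A. specialize (A eq_refl).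
      pose proof (w_strict (fun j => andb (E' j) (n <=? j)%nat) n) as B.
      assert (B' : w (fun j => andb (E' j) (n <=? j)%nat) < lam k n).
      { apply B. intros j Hj. apply andb_prop in Hj. destruct Hj as [Hj1 Hj2].
        apply Nat.leb_le in Hj2. destruct (Nat.eq_dec j n); [subst; congruence|lia]. }
      lra. }
    destruct (D n) eqn:E1, (D' n) eqn:E2; auto.
    - exfalso. apply (Hc D D' E1 E2). lra.
    - exfalso. apply (Hc D' D E2 E1). lra. }
  intros i. apply (H (S i)). lia.
Qed.

Section Cup.
Variable Dm : nat -> nat -> bool.
Hypothesis loc : forall m i, Dm m i = true -> (m <= i)%nat.
Hypothesis disj : forall m m' i, Dm m i = true -> Dm m' i = true -> m = m'.

Definition UM (M : nat) (i : nat) : bool := existsb (fun m => Dm m i) (seq 0 (S M)).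
Definition Ucup (i : nat) : bool := existsb (fun m => Dm m i) (seq 0 (S i)).

Lemma Ucup_spec i : Ucup i = true <-> exists m, Dm m i = true.
Proof.
  unfold Ucup. rewrite existsb_exists. split.
  - intros [m [_ Hm]]. eauto.
  - intros [m Hm]. exists m. split; auto. apply in_seq. pose proof (loc _ _ Hm). lia.
Qed.

Lemma UM_spec M i : UM M i = true <-> exists m, (m <= M)%nat /\ Dm m i = true.
Proof.
  unfold UM. rewrite existsb_exists. split.
  - intros [m [Hin Hm]]. apply in_seq in Hin. exists m. split; auto; lia.
  - intros [m [Hle Hm]]. exists m. split; auto. apply in_seq. lia.
Qed.

Lemma sum_UM M : sum_n (fun m => w (Dm m)) M = w (UM M).
Proof.
  induction M as [|M IH].
  - rewrite sum_O. apply w_ext. intros i. unfold UM. simpl. now rewrite Bool.orb_false_r.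
  - rewrite sum_Sn, IH. change (plus (w (UM M)) (w (Dm (S M)))) with (w (UM M) + w (Dm (S M))).
    rewrite <- w_add.
    + apply w_ext. intros i. unfold UM. rewrite (seq_S (S M) 0), existsb_app. simpl.
      now rewrite Bool.orb_false_r.
    + intros i Hi. apply UM_spec in Hi. destruct Hi as [m [Hm1 Hm2]].
      destruct (Dm (S M) i) eqn:E; auto. pose proof (disj _ _ _ Hm2 E). lia.
Qed.

Lemma cup_series : is_series (fun m => w (Dm m)) (w Ucup).
Proof.
  change (is_lim_seq (sum_n (fun m => w (Dm m))) (Finite (w Ucup))).
  apply (is_lim_seq_le_le (fun M => w Ucup - 2 * (1/2) ^ M) _ (fun _ => w Ucup)).
  - intros M. rewrite sum_UM. split.
    + rewrite (w_split Ucup (S M)).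
      assert (A : w (fun j => andb (Ucup j) (j <? S M)%nat) <= w (UM M)).
      { apply w_mono. intros j Hj. apply andb_prop in Hj. destruct Hj as [H1 H2].
        apply Ucup_spec in H1. destruct H1 as [m Hm]. apply Nat.ltb_lt in H2.
        apply UM_spec. exists m. split; auto. pose proof (loc _ _ Hm). lia. }
      assert (B : w (fun j => andb (Ucup j) (S M <=? j)%nat) <= 2 * lam k (S M)).
      { apply w_geN. intros j Hj. apply andb_prop in Hj. destruct Hj as [_ H2].
        now apply Nat.leb_le in H2. }
      assert (C : lam k (S M) <= (1/2) ^ M).
      { pose proof (lam_anti M (S M) ltac:(lia)). pose proof (lam_shift 0 M). simpl in H0.
        pose proof lam0_le1. assert (0 <= (1/2)^M) by (apply pow_le; lra). nra. }
      lra.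
    + apply w_mono. intros j Hj. apply UM_spec in Hj. destruct Hj as [m [_ Hm]].
      apply Ucup_spec. eauto.
  - replace (Finite (w Ucup)) with (Finite (w Ucup - 2 * 0)) by (f_equal; ring).
    apply is_lim_seq_minus'. apply is_lim_seq_const.
    pose proof (is_lim_seq_geom (1/2) ltac:(rewrite Rabs_pos_eq; lra)) as G.
    pose proof (is_lim_seq_scal_l _ 2 _ G) as G2. simpl in G2. exact G2.
  - apply is_lim_seq_const.
Qed.

Lemma cup_Series : Series (fun m => w (Dm m)) = w Ucup.
Proof. apply is_series_unique, cup_series. Qed.
End Cup.
End W.

Section Main.
Variable Om : Type.
Variable Q : nat -> R.
Variable k : nat.
Variable SS : R -> Prop.
Variable r : nat -> Om -> Om -> R.
Variable mu : nat -> nat.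
Hypothesis HM : forall m : nat,
      (INR m <= Q (mu m) < INR m + 1) /\
      (forall i, INR m <= Q i < INR m + 1 -> (mu m <= i)%nat) /\
      Q (mu m) = INR m /\
      (mu m < mu (S m))%nat.
Hypothesis HG : gauge_system SS r.

Lemma r_zero m a b : r m a b = 0 <-> a = b.
Proof. destruct (HG m) as [[_ [_ [H _]]] _]. apply H. Qed.
Lemma r_sym m a b : r m a b = r m b a.
Proof. destruct (HG m) as [[_ [H _]] _]. apply H. Qed.
Lemma r_range m a b : a <> b -> INR m < r m a b < INR m + 1.
Proof. intros Hab. destruct (HG m) as [[_ [_ [_ H]]] _]. apply H; auto. Qed.
Lemma r_rigid m : strongly_rigid (r m).
Proof. apply (HG m). Qed.

Lemma inJ_true m t q : INR m <= q -> q < t -> inJ m t q = true.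
Proof. intros H1 H2. unfold inJ. destruct (Rle_dec (INR m) q); [|lra]. destruct (Rlt_dec q t); [auto|lra]. Qed.
Lemma inJ_spec m t q : inJ m t q = true -> INR m <= q < t.
Proof. unfold inJ. destruct (Rle_dec (INR m) q); [|discriminate]. destruct (Rlt_dec q t); [auto|discriminate]. Qed.

Lemma inJ_loc m a b q : inJ m (r m a b) q = true -> INR m <= q < INR m + 1.
Proof.
  intros H. apply inJ_spec in H. destruct (classic (a = b)) as [->|Hne].
  - assert (r m b b = 0) by (apply r_zero; auto). pose proof (pos_INR m). lra.
  - pose proof (r_range m a b Hne). lra.
Qed.

Lemma floor_uniq m m' q : INR m <= q < INR m + 1 -> INR m' <= q < INR m' + 1 -> m = m'.
Proof.
  intros H1 H2. destruct (Nat.lt_total m m') as [Hl|[He|Hl]]; auto.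
  - apply le_INR in Hl. rewrite S_INR in Hl. lra.
  - apply le_INR in Hl. rewrite S_INR in Hl. lra.
Qed.

Lemma mu_ge m : (m <= mu m)%nat.
Proof. induction m; [lia|]. pose proof (proj2 (proj2 (proj2 (HM m)))). lia. Qed.

Lemma mu_mono m d : (mu m <= mu (m + d))%nat.
Proof. induction d; [rewrite Nat.add_0_r; lia|]. rewrite Nat.add_succ_r.
  pose proof (proj2 (proj2 (proj2 (HM (m + d))))). lia. Qed.

Lemma mu_mono' m m' : (m <= m')%nat -> (mu m <= mu m')%nat.
Proof. intros H. replace m' with (m + (m' - m))%nat by lia. apply mu_mono. Qed.

Definition Dm (X Y : nat -> Om) (m i : nat) : bool := inJ m (r m (X m) (Y m)) (Q i).

Lemma Dm_loc_mu X Y m i : Dm X Y m i = true -> (mu m <= i)%nat.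
Proof. intros H. apply inJ_loc in H. apply (proj1 (proj2 (HM m))). auto. Qed.

Lemma Dm_loc X Y m i : Dm X Y m i = true -> (m <= i)%nat.
Proof. intros H. pose proof (Dm_loc_mu X Y m i H). pose proof (mu_ge m). lia. Qed.

Lemma Dm_disj X Y m m' i : Dm X Y m i = true -> Dm X Y m' i = true -> m = m'.
Proof. intros H1 H2. apply inJ_loc in H1. apply inJ_loc in H2. eapply floor_uniq; eauto. Qed.

Lemma Dm_mu X Y m : X m <> Y m -> Dm X Y m (mu m) = true.
Proof.
  intros H. unfold Dm. pose proof (r_range m _ _ H). destruct (HM m) as [_ [_ [Hq _]]].
  rewrite Hq. apply inJ_true; lra.
Qed.

Lemma Dm_eq X Y m i : X m = Y m -> Dm X Y m i = false.
Proof.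
  intros H. unfold Dm. rewrite H. destruct (inJ m (r m (Y m) (Y m)) (Q i)) eqn:E; auto.
  apply inJ_spec in E. assert (r m (Y m) (Y m) = 0) by (apply r_zero; auto).
  pose proof (pos_INR m). lra.
Qed.

Lemma Lambda_w X Y : Lambda Q k r X Y = w k (Ucup (Dm X Y)).
Proof.
  unfold Lambda. apply (cup_Series k (Dm X Y)).
  - apply Dm_loc.
  - apply Dm_disj.
Qed.

Lemma ex_a X Y : ex_series (fun m => w k (Dm X Y m)).
Proof. eexists. apply (cup_series k (Dm X Y)); [apply Dm_loc|apply Dm_disj]. Qed.

Lemma a_upper X Y m : w k (Dm X Y m) <= 2 * lam k (mu m).
Proof. apply w_geN. apply Dm_loc_mu. Qed.

Lemma a_lower X Y m : X m <> Y m -> lam k (mu m) <= w k (Dm X Y m).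
Proof. intros H. apply w_single. now apply Dm_mu. Qed.

Lemma Lambda_tri X Y Z : Lambda Q k r X Z <= Lambda Q k r X Y + Lambda Q k r Y Z.
Proof.
  unfold Lambda. change (Series (fun m => w k (Dm X Z m)) <=
    Series (fun m => w k (Dm X Y m)) + Series (fun m => w k (Dm Y Z m))).
  rewrite <- Series_plus by apply ex_a.
  apply Series_le.
  - intros m. split; [apply w_nonneg|].
    destruct (classic (X m = Y m)) as [E|E].
    + assert (w k (Dm X Z m) = w k (Dm Y Z m)) by (unfold Dm; rewrite E; reflexivity).
      pose proof (w_nonneg k (Dm X Y m)). lra.
    + destruct (classic (Y m = Z m)) as [E'|E'].
      * assert (w k (Dm X Z m) = w k (Dm X Y m)) by (unfold Dm; rewrite E'; reflexivity).
        pose proof (w_nonneg k (Dm Y Z m)). lra.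
      * pose proof (a_upper X Z m). pose proof (a_lower X Y m E). pose proof (a_lower Y Z m E'). lra.
  - destruct (ex_a X Y) as [l1 H1]. destruct (ex_a Y Z) as [l2 H2].
    exists (plus l1 l2). apply (is_series_plus _ _ _ _ H1 H2).
Qed.

Lemma Lambda_sym X Y : Lambda Q k r X Y = Lambda Q k r Y X.
Proof.
  unfold Lambda. apply Series_ext. intros m. unfold LambdaM. now rewrite r_sym.
Qed.

Lemma Lambda_lower X Y m : X m <> Y m -> lam k (mu m) <= Lambda Q k r X Y.
Proof.
  intros H. rewrite Lambda_w. apply w_single. apply Ucup_spec; [apply Dm_loc|].
  exists m. now apply Dm_mu.
Qed.

Lemma Lambda_zero X Y : (forall m, X m = Y m) -> Lambda Q k r X Y = 0.
Proof.
  intros H. rewrite Lambda_w. apply w_false. intros i.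
  destruct (Ucup (Dm X Y) i) eqn:E; auto. apply Ucup_spec in E; [|apply Dm_loc].
  destruct E as [m Hm]. rewrite Dm_eq in Hm; auto.
Qed.


Variable f : nat -> list Om -> Om.
Hypothesis Hf : inj_on_len f.
Hypothesis HQ : enum_nonneg_rat Q.

Lemma Phi_even x n : Phi f x (2 * n) = x n.
Proof. unfold Phi. now rewrite Nat.even_even, Nat.div2_double. Qed.

Lemma Phi_odd x n : Phi f x (S (2 * n)) = f n (map x (seq 0 (S n))).
Proof.
  unfold Phi. replace (S (2 * n)) with (2 * n + 1)%nat by lia.
  rewrite Nat.even_odd. replace (2 * n + 1)%nat with (S (2 * n)) by lia.
  now rewrite Nat.div2_succ_double.
Qed.

Lemma Phi_agree x y n : (forall i, (i < n)%nat -> x i = y i) ->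
  forall j, (j < 2 * n)%nat -> Phi f x j = Phi f y j.
Proof.
  intros H j Hj. unfold Phi. pose proof (Nat.div2_odd j) as Hd.
  assert (Hlt : (Nat.div2 j < n)%nat).
  { destruct (Nat.odd j); simpl in Hd; lia. }
  destruct (Nat.even j).
  - apply H; auto.
  - f_equal. apply map_ext_in. intros a Ha. apply in_seq in Ha. apply H. lia.
Qed.

Lemma nth_map_seq (x : nat -> Om) j i d : (i <= j)%nat -> nth i (map x (seq 0 (S j))) d = x i.
Proof.
  intros H. rewrite (nth_indep _ d (x 0%nat)) by (rewrite length_map, length_seq; lia).
  rewrite map_nth, seq_nth by lia. reflexivity.
Qed.

Lemma f_inj_prefix x u j : f j (map x (seq 0 (S j))) = f j (map u (seq 0 (S j))) ->
  forall i, (i <= j)%nat -> x i = u i.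
Proof.
  intros H i Hi. apply Hf in H; [|rewrite length_map, length_seq; auto|rewrite length_map, length_seq; auto].
  rewrite <- (nth_map_seq x j i (x 0%nat) Hi), <- (nth_map_seq u j i (x 0%nat) Hi). now rewrite H.
Qed.

Definition d := tLambda Q k r f.

Lemma d_lower x y n : x n <> y n -> lam k (mu (2 * n)) <= d x y.
Proof.
  intros H. unfold d, tLambda. apply Lambda_lower. now rewrite !Phi_even.
Qed.

Lemma d_upper x y n : (forall i, (i < n)%nat -> x i = y i) -> d x y <= 2 * lam k (2 * n).
Proof.
  intros H. unfold d, tLambda. rewrite Lambda_w. apply w_geN.
  intros i Hi. apply Ucup_spec in Hi; [|apply Dm_loc]. destruct Hi as [m Hm].
  pose proof (Dm_loc _ _ _ _ Hm).
  destruct (Nat.lt_ge_cases m (2 * n)) as [Hl|Hl]; [|lia].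
  rewrite Dm_eq in Hm; [discriminate|]. apply Phi_agree with n; auto.
Qed.

Lemma d_diam x y : d x y <= 2 * lam k 0.
Proof.
  unfold d, tLambda. rewrite Lambda_w. apply w_geN. intros; lia.
Qed.

Lemma lam_small : forall eps, eps > 0 -> exists n, 2 * lam k (2 * n) < eps.
Proof.
  intros eps He. destruct (pow_lt_1_zero (1/2) ltac:(rewrite Rabs_pos_eq; lra) (eps/2) ltac:(lra)) as [N HN].
  exists N. specialize (HN (2 * N)%nat ltac:(lia)).
  rewrite Rabs_pos_eq in HN by (apply pow_le; lra).
  pose proof (lam_shift k 0 (2 * N)) as H. rewrite Nat.add_0_l in H. pose proof (lam0_le1 k).
  assert (0 <= (1/2)^(2*N)%nat) by (apply pow_le; lra). nra.
Qed.

Lemma d_small eps : eps > 0 -> exists n, forall x y, (forall i, (i < n)%nat -> x i = y i) -> d x y < eps.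
Proof.
  intros He. destruct (lam_small eps He) as [n Hn]. exists n. intros x y H.
  pose proof (d_upper x y n H). lra.
Qed.

Lemma d_nonneg x y : 0 <= d x y.
Proof. unfold d, tLambda. rewrite Lambda_w. apply w_nonneg. Qed.

Lemma d_zero x y : d x y = 0 <-> x = y.
Proof.
  split.
  - intros H. apply functional_extensionality. intros n.
    destruct (classic (x n = y n)) as [E|E]; auto. exfalso.
    pose proof (d_lower x y n E). pose proof (lam_pos k (mu (2 * n))). lra.
  - intros ->. unfold d, tLambda. apply Lambda_zero. auto.
Qed.

Lemma is_metric_d : is_metric d.
Proof.
  split; [apply d_nonneg|]. split; [apply d_zero|]. split.
  - intros x y. unfold d, tLambda. apply Lambda_sym.
  - intros x y z. unfold d, tLambda. apply Lambda_tri.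
Qed.

Lemma topo U : prod_open U <-> metric_open d U.
Proof.
  split.
  - intros HU x Hx. destruct (HU x Hx) as [n Hn].
    exists (lam k (mu (2 * n))). split; [apply lam_pos|].
    intros y Hy. apply Hn. intros i Hi.
    destruct (classic (y i = x i)) as [E|E]; auto. exfalso.
    pose proof (d_lower x y i (fun h => E (eq_sym h))).
    pose proof (lam_anti k (mu (2 * i)) (mu (2 * n)) (mu_mono' (2 * i) (2 * n) ltac:(lia))). lra.
  - intros HU x Hx. destruct (HU x Hx) as [eps [He Heps]].
    destruct (d_small eps He) as [n Hn]. exists n. intros y Hy. apply Heps.
    apply Hn. intros i Hi. symmetry. auto.
Qed.


Fixpoint maxpref (g : nat -> nat) (n : nat) : nat :=
  match n with O => O | S n' => Nat.max (maxpref g n') (g n') end.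

Lemma maxpref_ge g n i : (i < n)%nat -> (g i <= maxpref g n)%nat.
Proof.
  induction n; intros H; [lia|]. simpl. destruct (Nat.eq_dec i n) as [->|Hne]; [lia|].
  specialize (IHn ltac:(lia)). lia.
Qed.

Lemma complete_d : complete_metric d.
Proof.
  intros u Hc.
  assert (Hcoord : forall i, exists N, forall p q, (N <= p)%nat -> (N <= q)%nat -> u p i = u q i).
  { intros i. destruct (Hc (lam k (mu (2 * i))) (lam_pos k _)) as [N HN]. exists N.
    intros p q Hp Hq. destruct (classic (u p i = u q i)) as [E|E]; auto. exfalso.
    pose proof (d_lower (u p) (u q) i E). specialize (HN p q Hp Hq). lra. }
  set (Nf := fun i => proj1_sig (constructive_indefinite_description _ (Hcoord i))).
  assert (HNf : forall i p q, (Nf i <= p)%nat -> (Nf i <= q)%nat -> u p i = u q i).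
  { intros i. exact (proj2_sig (constructive_indefinite_description _ (Hcoord i))). }
  exists (fun i => u (Nf i) i). intros eps He. destruct (d_small eps He) as [n Hn].
  exists (maxpref Nf n). intros p Hp. apply Hn. intros i Hi.
  pose proof (maxpref_ge Nf n i Hi). apply HNf; lia.
Qed.

Lemma rat_between a b : 0 <= a < b -> exists q, a < q < b /\ is_rat q.
Proof.
  intros [Ha Hab].
  destruct (archimed (/ (b - a))) as [H1 _].
  set (bz := up (/ (b - a))) in *.
  assert (Hpos : 0 < / (b - a)) by (apply Rinv_0_lt_compat; lra).
  assert (Hbz : 0 < IZR bz) by lra.
  destruct (archimed (a * IZR bz)) as [H2 H3].
  set (az := up (a * IZR bz)) in *.
  exists (IZR az / IZR bz). split; [split|].
  - apply (Rmult_lt_reg_r (IZR bz)); auto. unfold Rdiv. rewrite Rmult_assoc, Rinv_l by lra. lra.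
  - apply (Rmult_lt_reg_r (IZR bz)); auto. unfold Rdiv. rewrite Rmult_assoc, Rinv_l by lra.
    assert (1 < (b - a) * IZR bz).
    { apply (Rmult_lt_compat_l (b - a)) in H1; [|lra]. rewrite Rinv_r in H1 by lra. lra. }
    lra.
  - exists az, bz. split; auto. apply lt_0_IZR in Hbz. lia.
Qed.

Lemma r_adm m a b : r m a b = 0 \/ INR m < r m a b < INR m + 1.
Proof.
  destruct (classic (a = b)) as [->|H]. left. now apply r_zero. right. now apply r_range.
Qed.

Lemma sep m t t' : (t = 0 \/ INR m < t < INR m + 1) -> INR m < t' -> t < t' ->
  exists i, inJ m t' (Q i) = true /\ inJ m t (Q i) = false.
Proof.
  intros Ht Ht' Hlt. pose proof (pos_INR m).
  destruct Ht as [->|Ht].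
  - exists (mu m). destruct (HM m) as [_ [_ [Hq _]]]. rewrite Hq. split.
    + apply inJ_true; lra.
    + destruct (inJ m 0 (INR m)) eqn:E; auto. apply inJ_spec in E. lra.
  - destruct (rat_between t t' ltac:(lra)) as [q [Hq Hr]].
    destruct HQ as [_ [_ Hsurj]]. destruct (Hsurj q ltac:(lra) Hr) as [i Hi].
    exists i. rewrite Hi. split.
    + apply inJ_true; lra.
    + destruct (inJ m t q) eqn:E; auto. apply inJ_spec in E. lra.
Qed.

Lemma r_eq_of_D X Y U V : (forall m i, Dm X Y m i = Dm U V m i) ->
  forall m, r m (X m) (Y m) = r m (U m) (V m).
Proof.
  intros H m. pose proof (r_adm m (X m) (Y m)) as A1. pose proof (r_adm m (U m) (V m)) as A2.
  pose proof (pos_INR m).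
  destruct (Rtotal_order (r m (X m) (Y m)) (r m (U m) (V m))) as [Hl|[He|Hl]]; auto; exfalso.
  - assert (INR m < r m (U m) (V m)) by lra.
    destruct (sep m _ _ A1 H1 Hl) as [i [E1 E2]].
    specialize (H m i). unfold Dm in H. rewrite E1, E2 in H. discriminate.
  - assert (INR m < r m (X m) (Y m)) by lra.
    destruct (sep m _ _ A2 H1 Hl) as [i [E1 E2]].
    specialize (H m i). unfold Dm in H. rewrite E1, E2 in H. discriminate.
Qed.

Lemma D_eq_of_U X Y U V : (forall i, Ucup (Dm X Y) i = Ucup (Dm U V) i) ->
  forall m i, Dm X Y m i = Dm U V m i.
Proof.
  intros H m i.
  assert (G : forall X Y U V, (forall i, Ucup (Dm X Y) i = Ucup (Dm U V) i) ->
     Dm X Y m i = true -> Dm U V m i = true).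
  { clear H X Y U V. intros X Y U V H E1.
    assert (Ucup (Dm X Y) i = true) by (apply Ucup_spec; [apply Dm_loc|eauto]).
    rewrite H in H0. apply Ucup_spec in H0; [|apply Dm_loc]. destruct H0 as [m' Hm'].
    assert (m' = m).
    { apply inJ_loc in E1. apply inJ_loc in Hm'. eapply floor_uniq; eauto. }
    now subst. }
  destruct (Dm X Y m i) eqn:E1, (Dm U V m i) eqn:E2; auto.
  - rewrite (G X Y U V H E1) in E2. discriminate.
  - rewrite (G U V X Y (fun j => eq_sym (H j)) E2) in E1. discriminate.
Qed.

Lemma rigid_d : strongly_rigid d.
Proof.
  intros x y u v Heq Hne.
  assert (Hr : forall m, r m (Phi f x m) (Phi f y m) = r m (Phi f u m) (Phi f v m)).
  { apply r_eq_of_D, D_eq_of_U, w_inj with (k := k).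
    unfold d, tLambda in Heq. now rewrite !Lambda_w in Heq. }
  assert (Hxy : exists n, x n <> y n).
  { apply not_all_ex_not. intros H. apply Hne. apply d_zero. now apply functional_extensionality. }
  destruct Hxy as [n Hn].
  assert (Hcase : forall j, (n <= j)%nat ->
     (forall i, (i <= j)%nat -> x i = u i /\ y i = v i) \/
     (forall i, (i <= j)%nat -> x i = v i /\ y i = u i)).
  { intros j Hj.
    assert (Hd : Phi f x (S (2 * j)) <> Phi f y (S (2 * j))).
    { rewrite !Phi_odd. intros E. apply Hn. apply (f_inj_prefix x y j E n Hj). }
    assert (Hnz : r (S (2 * j)) (Phi f x (S (2 * j))) (Phi f y (S (2 * j))) <> 0).
    { intros E. apply Hd. now apply r_zero in E. }
    destruct (r_rigid (S (2 * j)) _ _ _ _ (Hr (S (2 * j))) Hnz) as [[E1 E2]|[E1 E2]];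
      rewrite !Phi_odd in E1, E2.
    - left. intros i Hi. split; eapply f_inj_prefix; eauto.
    - right. intros i Hi. split; eapply f_inj_prefix; eauto. }
  destruct (Hcase n (Nat.le_refl n)) as [A|B].
  - left. split; apply functional_extensionality; intros i;
      (destruct (Hcase (Nat.max i n) ltac:(lia)) as [A'|B'];
       [apply A'; lia|exfalso; apply Hn;
        destruct (A n (Nat.le_refl n)), (B' n ltac:(lia)); congruence]).
  - right. split; apply functional_extensionality; intros i;
      (destruct (Hcase (Nat.max i n) ltac:(lia)) as [A'|B'];
       [exfalso; apply Hn; destruct (B n (Nat.le_refl n)), (A' n ltac:(lia)); congruence
       |apply B'; lia]).
Qed.

End Main.

Theorem theorem4p20 (Om : Type) (Q : nat -> R) (k : nat) (S : R -> Prop)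
  (r : nat -> Om -> Om -> R) (f : nat -> list Om -> Om) :
  card_continuum Om ->
  enum_nonneg_rat Q -> propM Q ->
  inj_on_len f ->
  ubiq_dense S ->
  gauge_system S r ->
  Met_N (tLambda Q k r f) /\
  (forall x y, tLambda Q k r f x y <= 2 * lam k 0) /\
  complete_metric (tLambda Q k r f) /\
  strongly_rigid (tLambda Q k r f).
Proof.
  intros _ HQ [mu HM] Hf _ HG.
  split; [split|split; [|split]].
  - apply (is_metric_d Om Q k S r mu HM HG f).
  - apply (topo Om Q k S r mu HM HG f).
  - apply (d_diam Om Q k S r mu HM HG f).
  - apply (complete_d Om Q k S r mu HM HG f).
  - apply (rigid_d Om Q k S r mu HM HG f Hf HQ).
Qed.
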